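(* Let $\nu>0$ and $L_1,L_2>0$. For every $\gamma>\nu+1/2$ and every $Q>0$ with \[ Q\leq L_1^2\Big(\sum_{k\geq1}k^{2(\nu-\gamma)}\Big)^{-1}, \] one has \[ \tilde W(\gamma,Q)\cap\{f\in L_\infty(\mathbb{T}):\|f\|_\infty\geq L_2\}\subset\Lambda_\nu(L_1,L_2). \]
   Context: Let $\varphi_1\equiv1$, $\varphi_{2k}(x)=\sqrt2\cos(kx)$, $\varphi_{2k+1}(x)=\sqrt2\sin(kx)$ ($k\geq1$), orthonormal in $L_2$ of the uniform law on $[0,2\pi]$ with inner product $\langle f,g\rangle=\frac1{2\pi}\int_0^{2\pi}fg$; for a $2\pi$-periodic $f$ set $\beta_k(f)=\langle f,\varphi_k\rangle$. $L_2(\mathbb{T})$, $L_\infty(\mathbb{T})$ denote the corresponding spaces of $2\pi$-periodic functions. For $\gamma,Q>0$, $\tilde W(\gamma,Q)=\{f\in L_2(\mathbb{T}) : f=\sum_{k\geq1}\beta_k\varphi_k,\ \sum_{k\geq1}k^{2\gamma}\beta_k^2\leq Q\}$. For $\nu,L_1,L_2>0$, $\Lambda_\nu(L_1,L_2)=\{f\in L_\infty(\mathbb{T}):\sum_{k\geq1}k^\nu|\beta_k(f)|\leq L_1 \text{ and } \|f\|_\infty\geq L_2\}$. *)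

(* Defs.v *)
From HB Require Import structures.
From mathcomp Require Import all_boot all_order all_algebra.
From mathcomp Require Import all_classical all_reals all_analysis.
From mathcomp Require Import ess_sup_inf.
Set Implicit Arguments. Unset Strict Implicit. Unset Printing Implicit Defensive.
Import Order.TTheory GRing.Theory Num.Theory.
Import numFieldNormedType.Exports.
Local Open Scope classical_set_scope.
Local Open Scope ring_scope.

Section Defs.
Variable R : realType.
Local Notation mu := (@lebesgue_measure R).

Definition I02pi : set R := [set x : R | (0 <= x <= 2 * pi)%R].

(* phi_1 = 1, phi_{2k} = sqrt 2 cos(kx), phi_{2k+1} = sqrt 2 sin(kx); phi_0 unused *)
Definition phi (k : nat) (x : R) : R :=
  if k == 1%N then 1
  else if odd k then Num.sqrt 2 * sin ((k./2)%:R * x)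
  else Num.sqrt 2 * cos ((k./2)%:R * x).

Definition periodic2pi (f : R -> R) : Prop := forall x, f (x + 2 * pi) = f x.

Definition beta (f : R -> R) (k : nat) : R :=
  (2 * pi)^-1 * Rintegral mu I02pi (fun x => f x * phi k x).

Definition supnorm (f : R -> R) : \bar R :=
  ess_sup mu (fun x => (`|f x|)%:E).

Definition L2T (f : R -> R) : Prop :=
  [/\ periodic2pi f, measurable_fun setT f &
      (\int[mu]_(x in I02pi) ((f x) ^+ 2)%:E < +oo)%E].

Definition LinfT (f : R -> R) : Prop :=
  [/\ periodic2pi f, measurable_fun setT f & (supnorm f < +oo)%E].

Definition Wtilde (gamma Q : R) (f : R -> R) : Prop :=
  [/\ L2T f,
      (* f = sum_{k>=1} beta_k phi_k in L_2 *)
      (fun n : nat => \int[mu]_(x in I02pi)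
          ((f x - \sum_(1 <= k < n) beta f k * phi k x) ^+ 2)%:E)%E
        @ \oo --> 0%E &
      (\sum_(1 <= k <oo) ((k%:R `^ (2 * gamma)) * (beta f k) ^+ 2)%:E <= Q%:E)%E].

Definition Lambda (nu L1 L2 : R) (f : R -> R) : Prop :=
  [/\ LinfT f,
      (\sum_(1 <= k <oo) ((k%:R `^ nu) * `|beta f k|)%:E <= L1%:E)%E &
      (L2%:E <= supnorm f)%E].

Definition zeta_sum (nu gamma : R) : R :=
  fine (\sum_(1 <= k <oo) ((k%:R : R) `^ (2 * (nu - gamma)))%:E)%E.

End Defs.

(* Main.v *)
Require Import Defs.
From HB Require Import structures.
From mathcomp Require Import all_boot all_order all_algebra.
From mathcomp Require Import all_classical all_reals all_analysis.
From mathcomp Require Import ess_sup_inf.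
From mathcomp Require Import ring lra.
Import Order.TTheory GRing.Theory Num.Theory.
Import numFieldNormedType.Exports.
Local Open Scope ring_scope.

Lemma term_le (R : realType) (nu gamma c bt : R) (k : nat) : 0 < nu -> 0 < c ->
  (k%:R `^ nu) * `|bt| <=
  (c / 2) * (k%:R `^ (2 * (nu - gamma))) + (2 * c)^-1 * ((k%:R `^ (2 * gamma)) * bt ^+ 2).
Proof.
move=> nu0 c0.
have sq : forall (x r : R), x `^ (2 * r) = (x `^ r) ^+ 2.
  by move=> x r; rewrite mulrC powRrM -powR_mulrn ?powR_ge0.
rewrite !sq.
case: k => [|k].
  rewrite powR0 ?gt_eqF // mul0r.
  have c0' := ltW c0.
  apply: addr_ge0; apply: mulr_ge0.
  - by rewrite divr_ge0.
  - by rewrite sqr_ge0.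
  - by rewrite invr_ge0 mulr_ge0.
  - by rewrite mulr_ge0 ?sqr_ge0.
have kn0 : (k.+1%:R : R) != 0 by rewrite pnatr_eq0.
have -> : (k.+1%:R : R) `^ nu = k.+1%:R `^ (nu - gamma) * k.+1%:R `^ gamma.
  by rewrite -powRD ?kn0 ?implybT // subrK.
set a := _ `^ (nu - gamma); set g := _ `^ gamma.
have -> : (g ^+ 2 * bt ^+ 2) = (g * `|bt|) ^+ 2 by rewrite exprMn real_normK ?num_real.
set b := g * `|bt|.
rewrite -mulrA -/b.
have : 0 <= (c * a - b) ^+ 2 / (2 * c) by rewrite mulr_ge0 ?sqr_ge0 ?invr_ge0 ?mulr_ge0 ?ltW.
have -> : (c * a - b) ^+ 2 / (2 * c) = c / 2 * a ^+ 2 + (2 * c)^-1 * b ^+ 2 - a * b.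
  by field; rewrite gt_eqF.
by rewrite subr_ge0.
Qed.

Theorem proposition5 (R : realType) (nu L1 L2 : R) :
  0 < nu -> 0 < L1 -> 0 < L2 ->
  forall gamma Q : R, nu + 2^-1 < gamma -> 0 < Q ->
  Q <= L1 ^+ 2 / zeta_sum nu gamma ->
  forall f : R -> R,
    Wtilde gamma Q f -> LinfT f -> (L2%:E <= supnorm f)%E ->
    Lambda nu L1 L2 f.
Proof.
move=> nu0 L10 L20 gamma Q hg Q0 hQ f [fL2 fcv fsum] fLinf fsup.
split=> //.
set S := (\sum_(1 <= k <oo) ((k%:R : R) `^ (2 * (nu - gamma)))%:E)%E.
have S0 : (0 <= S)%E by apply: nneseries_ge0 => n _ _; rewrite lee_fin powR_ge0.
have ZS : zeta_sum nu gamma = fine S by [].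
have Zn0 : zeta_sum nu gamma != 0.
  apply/negP => /eqP Z0; move: hQ; rewrite Z0 invr0 mulr0.
  by rewrite leNgt Q0.
have Sfin : S \is a fin_num.
  move: Zn0; rewrite ZS; case: (S) S0 => // _ /=; by rewrite eqxx.
have SZ : S = (zeta_sum nu gamma)%:E.
  by rewrite ZS fineK.
have Z0 : 0 < zeta_sum nu gamma.
  by rewrite lt0r Zn0 /= ZS fine_ge0.
set Z := zeta_sum nu gamma in Zn0 SZ Z0 hQ.
set c := L1 / Z.
have c0 : 0 < c by rewrite divr_gt0.
apply: (@le_trans _ _ (\sum_(1 <= k <oo)
   (((c / 2)%:E * ((k%:R : R) `^ (2 * (nu - gamma)))%:E) +
    (((2 * c)^-1)%:E * ((k%:R : R) `^ (2 * gamma) * beta f k ^+ 2)%:E)))%E).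
  apply: lee_nneseries.
    by move=> i _ _; rewrite lee_fin mulr_ge0 ?powR_ge0.
  by move=> n _; rewrite -!EFinM -EFinD lee_fin; apply: term_le.
rewrite nneseriesD; last first.
- move=> i _ _; rewrite -EFinM lee_fin; apply: mulr_ge0.
    by rewrite invr_ge0 mulr_ge0 // ltW.
  by rewrite mulr_ge0 ?powR_ge0 ?sqr_ge0.
- move=> i _ _; rewrite -EFinM lee_fin; apply: mulr_ge0.
    by rewrite divr_ge0 // ltW.
  by rewrite powR_ge0.
rewrite nneseriesZl; last by move=> i _; rewrite lee_fin powR_ge0.
rewrite nneseriesZl; last by move=> i _; rewrite lee_fin mulr_ge0 ?powR_ge0 ?sqr_ge0.
rewrite -/S SZ.
apply: (@le_trans _ _ ((c / 2)%:E * Z%:E + ((2 * c)^-1)%:E * Q%:E)%E).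
  apply: leeD2l; apply: lee_wpmul2l => //.
  by rewrite lee_fin invr_ge0 mulr_ge0 // ltW.
rewrite -!EFinM -EFinD lee_fin.
have hQZ : Q * Z <= L1 ^+ 2 by rewrite -ler_pdivlMr.
rewrite /c.
have -> : L1 / Z / 2 * Z + (2 * (L1 / Z))^-1 * Q = L1 / 2 + Q * Z / (2 * L1).
  by field; rewrite !gt_eqF.
apply: (@le_trans _ _ (L1 / 2 + L1 ^+ 2 / (2 * L1))).
  by rewrite lerD2l ler_pM2r // invr_gt0 mulr_gt0.
rewrite le_eqVlt; apply/orP; left; apply/eqP; field; by rewrite gt_eqF.
Qed.
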